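(* Let $G$ be an extraspecial $2$-group. (i) Two elements $g,h\in G$ are automorphic (i.e. $\varphi(g)=h$ for some $\varphi\in\mathrm{Aut}(G)$) if and only if $g$ and $h$ have the same order and ($g\in Z(G)\iff h\in Z(G)$). (ii) The number of orbits of the natural action of $\mathrm{Aut}(G)$ on $G$ is $3$ if $G$ is isomorphic to the quaternion group $Q_2$ of order $8$, and $4$ otherwise.
   Context: A special $p$-group is a finite $p$-group whose center, derived subgroup and Frattini subgroup coincide and are elementary abelian; it is extraspecial if $|Z(G)|=p$. *)

(* Defs.v *)
From mathcomp Require Import all_boot all_fingroup all_solvable.
Set Implicit Arguments.
Unset Strict Implicit.
Unset Printing Implicit Defensive.

(* Main.v *)
Require Import Defs.
From mathcomp Require Import all_boot all_fingroup all_solvable.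
Set Implicit Arguments.
Unset Strict Implicit.
Unset Printing Implicit Defensive.
Local Open Scope group_scope.

Lemma rassoc (gT : finGroupType) (a b c : gT) r : a * b = c -> a * (b * r) = c * r.
Proof. by move=> <-; rewrite mulgA. Qed.

Lemma mulgA' (gT : finGroupType) (x y w : gT) : x * y * w = x * (y * w).
Proof. by rewrite mulgA. Qed.

Definition pw (gT : finGroupType) (u : gT) (b : bool) := if b then u else 1.

Section Ext.
Variables (gT : finGroupType) (G : {group gT}) (z : gT).
Hypotheses (pG : 2.-group G) (esG : extraspecial G).
Hypotheses (defZ : 'Z(G) = [set 1; z]) (ntz : z != 1).

Lemma ZGz : z \in 'Z(G). Proof. by rewrite defZ !inE eqxx orbT. Qed.
Lemma inZ u : u \in 'Z(G) -> u = 1 \/ u = z.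
Proof. by rewrite defZ !inE => /orP[]/eqP; auto. Qed.
Lemma Gz : z \in G. Proof. exact: subsetP (center_sub G) _ ZGz. Qed.
Lemma zC v : v \in G -> commute z v.
Proof. by move=> Gv; have /setIP[_ /centP cz] := ZGz; apply: cz. Qed.
Lemma zz : z * z = 1.
Proof.
have oZ : #|'Z(G)| = 2 by rewrite defZ cards2 eq_sym ntz.
by apply/eqP; rewrite -expg2 -order_dvdn -oZ order_dvdG ?ZGz.
Qed.
Lemma zV : z^-1 = z.
Proof. by rewrite -[z^-1]mulg1 -zz mulKg. Qed.

Lemma comm_in v w : v \in G -> w \in G -> [~ v, w] \in 'Z(G).
Proof. by move=> Gv Gw; have [[_ <-] _] := esG; apply: mem_commg. Qed.

Lemma sq_in v : v \in G -> v * v \in 'Z(G).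
Proof.
move=> Gv; have [[<- _] _] := esG; rewrite (Phi_joing pG) -expg2.
apply: mem_gen; apply/setUP; right.
by have := Mho_p_elt 1 Gv (mem_p_elt pG Gv); rewrite expn1.
Qed.

Definition eps (x v : gT) := [~ v, x] != 1.

Lemma commE v x : v \in G -> x \in G -> [~ v, x] = pw z (eps x v).
Proof.
move=> Gv Gx; rewrite /eps; case: (inZ (comm_in Gv Gx)) => ->.
  by rewrite eqxx.
by rewrite ntz.
Qed.

Lemma commE' v x : v \in G -> x \in G -> [~ x, v] = pw z (eps x v).
Proof. by move=> Gv Gx; rewrite -invgR commE //; case: eps; rewrite /= ?invg1 ?zV. Qed.

Lemma epsM x v w : v \in G -> w \in G -> x \in G ->
  eps x (v * w) = eps x v (+) eps x w.
Proof.
move=> Gv Gw Gx; rewrite {1}/eps commMgJ !commE //.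
have zw : z ^ w = z by apply/conjg_fixP/commgP; apply: zC.
case: (eps x v); case: (eps x w); rewrite /= ?conj1g ?zw ?mulg1 ?mul1g ?zz ?eqxx ?ntz //.
Qed.

Lemma mk_aut (f : gT -> gT) :
  {in G &, {morph f : x y / x * y}} -> {in G, forall x, f x \in G} ->
  {in G, forall x, f x = 1 -> x = 1} ->
  exists2 a, a \in Aut G & {in G, a =1 f}.
Proof.
move=> fM fG fK; pose fm := Morphism fM.
have injf : {in G &, injective f}.
  apply/(@injmP _ _ _ fm); apply/subsetP => v Kv.
  have Gv : v \in G by move: Kv; rewrite inE => /andP[].
  by rewrite inE; apply/eqP; apply: (fK v Gv); apply: (mker Kv).
clear fm.
have sBf : f @: G \subset G by apply/subsetP => _ /imsetP[v Gv ->]; apply: fG.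
exists (perm_in injf sBf); last exact: perm_inE.
rewrite inE; apply/andP; split; first exact: perm_in_on.
apply/morphicP => v w Gv Gw; rewrite !perm_inE ?groupM //; exact: fM.
Qed.


Lemma pwG u b : u \in G -> pw u b \in G.
Proof. by case: b => //= _; apply: group1. Qed.

Lemma refl_aut x : x \in G -> x * x = z ->
  exists2 a, a \in Aut G & {in G, forall v, a v = v * pw x (eps x v)}.
Proof.
move=> Gx xx; have xz : z * x = x * z by apply: zC.
have zzz := zz.
apply: mk_aut.
- move=> v w Gv Gw /=; rewrite epsM //.
  have xw : x * w = w * x * pw z (eps x w) by rewrite commgC commE'.
  move: xw; case: (eps x v); case: (eps x w) => /= xw;
  rewrite ?mulg1 ?mul1g in xw *;
  rewrite ?(mulgA', mul1g, mulg1, xw, xz, xx, zzz, rassoc _ xw, rassoc _ xz,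
            rassoc _ xx, rassoc _ zzz) //.
- by move=> v Gv; rewrite groupM ?pwG.
move=> v Gv; case E: (eps x v) => /= H; last by rewrite mulg1 in H.
have vE : v = x^-1 by rewrite -(mulgK x v) H mul1g.
move: E; rewrite /eps vE; have /commgP -> : commute x^-1 x.
  by apply: commute_sym; apply: commuteV.
by [].
Qed.

Lemma siegel_aut y t : y \in G -> t \in G -> y * y = 1 -> t * t = 1 ->
  commute y t ->
  exists2 a, a \in Aut G & {in G, forall v, a v =
      v * (pw y (eps t v) * pw t (eps y v) * pw z (eps t v && eps y v))}.
Proof.
move=> Gy Gt yy tt yt; have zy : z * y = y * z by apply: zC.
have zt : z * t = t * z by apply: zC.
have ty : t * y = y * t by [].
have zzz := zz.
apply: mk_aut.
- move=> v w Gv Gw /=; rewrite !epsM //.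
  have yw : y * w = w * y * pw z (eps y w) by rewrite commgC commE'.
  have tw : t * w = w * t * pw z (eps t w) by rewrite commgC commE'.
  have zw : z * w = w * z by apply: zC.
  move: yw tw; case: (eps y w); case: (eps t w); case: (eps y v); case: (eps t v)
    => /= yw tw; rewrite ?mulg1 ?mul1g in yw tw *;
  rewrite ?(mulgA', mul1g, mulg1, yw, tw, zw, zy, zt, ty, yy, tt, zzz,
     rassoc _ yw, rassoc _ tw, rassoc _ zw, rassoc _ zy, rassoc _ zt,
     rassoc _ ty, rassoc _ yy, rassoc _ tt, rassoc _ zzz) //.
- by move=> v Gv; rewrite !groupM ?pwG ?Gz.
move=> v Gv H.
set L := _ * _ * _ in H.
have vE : v = L^-1 by rewrite -(mulgK L v) H mul1g.
have cL u : commute u y -> commute u t -> commute u z -> commute u L.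
  move=> uy ut uz; rewrite /L.
  have c1 b : commute u (pw y b) by case: b => //=; apply: commute1.
  have c2 b : commute u (pw t b) by case: b => //=; apply: commute1.
  have c3 b : commute u (pw z b) by case: b => //=; apply: commute1.
  by apply: commuteM; [apply: commuteM|].
have ct : eps t v = false.
  rewrite /eps vE; apply/negbTE; rewrite negbK; apply/commgP.
  apply: commute_sym; apply: commuteV; apply: cL.
  - exact: commute_sym.
  - exact: commute_refl.
  - exact: commute_sym (zC Gt).
have cy : eps y v = false.
  rewrite /eps vE; apply/negbTE; rewrite negbK; apply/commgP.
  apply: commute_sym; apply: commuteV; apply: cL.
  - exact: commute_refl.
  - exact: yt.
  - exact: commute_sym (zC Gy).
by move: H; rewrite /L ct cy /= !mulg1.
Qed.

Lemma ncomm (a b : gT) : a \notin 'C[b] -> [~ b, a] != 1.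
Proof. by apply: contra => /commgP c; apply/cent1P; apply: commute_sym. Qed.
Lemma ncomm' (a b : gT) : a \notin 'C[b] -> [~ a, b] != 1.
Proof. by apply: contra => /commgP c; apply/cent1P. Qed.
Lemma ncommV (a b : gT) : a \notin 'C[b] -> [~ b^-1, a] != 1.
Proof.
apply: contra => /commgP c; apply/cent1P; rewrite -[b]invgK.
by apply: commuteV; apply: commute_sym.
Qed.

Lemma caseA (g h : gT) : g \in G -> h \in G -> [~ g, h] != 1 -> g * g = h * h ->
  exists2 a, a \in Aut G & a g = h.
Proof.
move=> Gg Gh ngh gh.
have c : [~ h, g^-1] = z.
  case: (inZ (comm_in Gh (groupVr Gg))) => // /eqP/commgP hg.
  case/negP: ngh; apply/commgP; apply: commute_sym.
  by rewrite -[g]invgK; apply: commuteV.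
set x := g^-1 * h.
have Gx : x \in G by rewrite groupM ?groupV.
have zh : z * h = h * z by apply: zC.
have xx : x * x = z.
  rewrite /x -mulgA (mulgA h) (commgC h) c -(mulgA _ z) zh mulgA.
  by rewrite !mulgA -(mulgA _ h h) -gh !mulgA mulgKV mulVg mul1g.
have [a Aa aE] := refl_aut Gx xx.
exists a => //; rewrite aE //.
have -> : eps x g = true.
  rewrite /eps; apply/negP => /commgP cgx.
  case/negP: ngh; apply/commgP.
  by have := commuteM (commute_refl g) cgx; rewrite /x mulKVg.
by rewrite /= /x mulKVg.
Qed.

Lemma caseB (g h : gT) : g \in G -> h \in G -> g \notin 'Z(G) -> h \notin 'Z(G) ->
  commute g h -> g * g = h * h -> exists2 a, a \in Aut G & a g = h.
Proof.
move=> Gg Gh nZg nZh cgh gh.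
have nc v : v \in G -> v \notin 'Z(G) -> exists2 u, u \in G & u \notin 'C[v].
  move=> Gv nZv; have : ~~ (G \subset 'C[v]).
    by rewrite sub_cent1; apply: contra nZv => cv; apply/setIP; split.
  by case/subsetPn => u Gu nu; exists u.
have [y Gy [nyg nyh]] : exists2 y, y \in G & y \notin 'C[g] /\ y \notin 'C[h].
  have [u Gu nug] := nc g Gg nZg; have [w Gw nwh] := nc h Gh nZh.
  case Uh: (u \in 'C[h]); last by exists u; rewrite ?Uh.
  case Wg: (w \in 'C[g]); last by exists w; rewrite ?Wg.
  exists (u * w); first by rewrite groupM.
  split.
    apply: contra nug => uwg; by rewrite -(mulgK w u) groupM ?groupV.
  apply: contra nwh => uwh; by rewrite -(mulKg u w) groupM ?groupV.
have syZ : y * y \in 'Z(G) by apply: sq_in.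
have sgZ : g * g \in 'Z(G) by apply: sq_in.
have compose x : x \in G -> [~ g, x] != 1 -> [~ x, h] != 1 -> x * x = g * g ->
    exists2 a, a \in Aut G & a g = h.
  move=> Gx n1 n2 xg.
  have [a1 Aa1 a1g] := caseA Gg Gx n1 (esym xg).
  have [a2 Aa2 a2x] := caseA Gx Gh n2 (etrans xg gh).
  by exists (a1 * a2); rewrite ?groupM // permM a1g a2x.
case: (eqVneq (y * y) (g * g)) => [yg | nyg2].
  by apply: (compose y Gy (ncomm nyg) (ncomm' nyh) yg).
have cgy : [~ g, y] = z.
  by case: (inZ (comm_in Gg Gy)) => // /eqP; rewrite (negPf (ncomm nyg)).
case: (eqVneq (g * g) 1) => [g1 | ng1].
  have yz : y * y = z.
    by case: (inZ syZ) => // y1; case/eqP: nyg2; rewrite y1 g1.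
  apply: (compose (y * g)); first by rewrite groupM.
  - apply: ncomm; apply: contra nyg => ygg.
    by rewrite -(mulgK g y) groupM ?groupV ?cent1id.
  - apply: ncomm'; apply: contra nyh => ygh.
    rewrite -(mulgK g y) groupM ?groupV //; apply/cent1P; exact: cgh.
  have zg : z * g = g * z by apply: zC.
  rewrite g1 -mulgA (mulgA g) (commgC g) cgy -(mulgA _ z) zg !mulgA yz.
  by rewrite -(mulgA z g g) g1 mulg1 zz.
have gz : g * g = z by case: (inZ sgZ) => // g1; rewrite g1 eqxx in ng1.
have y1 : y * y = 1.
  by case: (inZ syZ) => // yz; case/eqP: nyg2; rewrite yz gz.
set t := g^-1 * h.
have Gt : t \in G by rewrite groupM ?groupV.
have cgt : commute g t by apply: commuteM => //; apply: commuteV.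
have tt : t * t = 1.
  have hg : commute h g^-1 by apply: commuteV; apply: commute_sym.
  by rewrite /t -mulgA (mulgA h) hg -!mulgA -gh !mulgA mulgKV mulVg.
have eyt : eps y t = false.
  rewrite /t epsM ?groupV //.
  have -> : eps y g^-1 = true by apply: ncommV.
  have -> : eps y h = true by apply: ncomm.
  by [].
have cyt : commute y t.
  by apply: commute_sym; apply/commgP; move: eyt; rewrite /eps => /negbFE.
have [a Aa aE] := siegel_aut Gy Gt y1 tt cyt.
exists a => //; rewrite aE //.
have -> : eps t g = false by rewrite /eps; apply/negbTE; rewrite negbK; apply/commgP.
have -> : eps y g = true by apply: ncomm.
by rewrite /= mul1g mulg1 /t mulKVg.
Qed.

Lemma oz : #[z] = 2.
Proof. by apply: nt_prime_order => //; rewrite expg2 zz. Qed.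

Lemma orderZ (g : gT) : g \in 'Z(G) -> (g = 1 /\ #[g] = 1%N) \/ (g = z /\ #[g] = 2).
Proof. by case/inZ => ->; [left; rewrite order1 | right; rewrite oz]. Qed.

Lemma aut_props a (g : gT) : a \in Aut G -> g \in G ->
  #[a g] = #[g] /\ (a g \in 'Z(G) <-> g \in 'Z(G)).
Proof.
move=> Aa Gg; split; first by rewrite -{1}(autmE Aa) (order_injm (injm_autm Aa)).
have /andP[_ /forall_inP chZ] := center_char G.
have img b x : b \in Aut G -> x \in 'Z(G) -> b x \in 'Z(G).
  by move=> Ab Zx; apply: (subsetP (chZ b Ab)); apply: imset_f.
split=> [Zag | Zg]; last exact: img.
by rewrite -(permK a g); apply: img; rewrite ?groupV.
Qed.

Lemma partI (g h : gT) : g \in G -> h \in G ->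
  (exists2 a, a \in Aut G & a g = h) <-> (#[g] = #[h] /\ (g \in 'Z(G) <-> h \in 'Z(G))).
Proof.
move=> Gg Gh; split.
  case=> a Aa <-; have [o c] := aut_props Aa Gg; split => //.
  by split => H; apply/c.
case=> og cZ; case Zg: (g \in 'Z(G)).
  have Zh : h \in 'Z(G) by apply/cZ.
  have gh : g = h.
    case: (orderZ Zg) (orderZ Zh) og => [[-> ->]|[-> ->]] [[-> ->]|[-> ->]] //.
  by exists 1; rewrite ?group1 // perm1.
have Zh : h \notin 'Z(G) by apply/negP => /cZ; rewrite Zg.
have nZg : g \notin 'Z(G) by rewrite Zg.
have sq : g * g = h * h.
  have e : (g * g == 1) = (h * h == 1) by rewrite -!expg2 -!order_dvdn og.
  case: (inZ (sq_in Gg)) => g2; case: (inZ (sq_in Gh)) => h2; rewrite g2 h2 //;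
    by move: e; rewrite g2 h2 eqxx (negPf ntz).
case: (eqVneq [~ g, h] 1) => [/eqP/commgP cgh | ngh].
  exact: caseB.
exact: caseA.
Qed.

Lemma ordG (x : gT) : x \in G -> x \notin 'Z(G) -> #[x] = 2 \/ #[x] = 4.
Proof.
move=> Gx nZx; have ntx : x != 1 by apply: contra nZx => /eqP ->; apply: group1.
case: (inZ (sq_in Gx)) => xx.
  by left; apply: nt_prime_order => //; rewrite expg2.
right; have d4 : #[x] %| 4.
  by rewrite order_dvdn -[4]/(2 * 2)%N expgM !expg2 xx zz.
have d2 : ~~ (#[x] %| 2) by rewrite order_dvdn expg2 xx.
have d1 : #[x] != 1%N by rewrite order_eq1.
have le4 := dvdn_leq (isT : 0 < 4) d4; move: le4 d4 d2 d1; case: #[x] => [|[|[|[|[|n]]]]] //.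
Qed.

Definition key (x : gT) := (#[x] == 2, x \in 'Z(G)).

Lemma keyP (x y : gT) : x \in G -> y \in G ->
  (#[x] = #[y] /\ (x \in 'Z(G) <-> y \in 'Z(G))) <-> key x = key y.
Proof.
move=> Gx Gy; split.
  case=> o c; rewrite /key o; congr pair; apply/idP/idP => ?; exact/c.
case=> o c; split; last by rewrite c.
case Zx: (x \in 'Z(G)).
  have Zy : y \in 'Z(G) by rewrite -c.
  by case: (orderZ Zx) (orderZ Zy) o => [[_ ->]|[_ ->]] [[_ ->]|[_ ->]].
have nZy : y \notin 'Z(G) by rewrite -c Zx.
have nZx : x \notin 'Z(G) by rewrite Zx.
by case: (ordG Gx nZx) (ordG Gy nZy) o => -> [] ->.
Qed.

Lemma Q8_noinv : G \isog 'Q_8 -> forall x, x \in G -> #[x] = 2 -> x \in 'Z(G).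
Proof.
case/isogP => f injf imf x Gx ox.
have gt32 : 2 < 3 by [].
have isoQ : 'Q_8 \isog [set: 'Q_(2 ^ 3)] by exact: isog_refl.
have [[x0 y0] genQ _] := generators_quaternion gt32 isoQ.
have [_ _ [defZQ _ uniq _ _] _ _] := quaternion_structure gt32 genQ isoQ.
have fxQ : f x \in 'Q_8 by rewrite inE.
have ofx : #[f x] = 2 by rewrite (order_injm injf Gx).
have : f x \in 'Z('Q_8) by rewrite (uniq _ fxQ ofx) defZQ cycle_id.
rewrite -imf -injm_center // => /morphimP[x' Gx' Zx' e].
by rewrite (injmP injf _ _ Gx Gx' e).
Qed.

Lemma noinv_Q8 : (forall x, x \in G -> #[x] = 2 -> x \in 'Z(G)) -> G \isog 'Q_8.
Proof.
move=> noinv.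
have oZ : #|'Z(G)| = 2 by rewrite defZ cards2 eq_sym ntz.
have defG1 : 'Z(G) = 'Ohm_1(G).
  apply/eqP; rewrite eqEsubset; apply/andP; split.
    apply/subsetP=> u Zu; rewrite (OhmE _ pG) mem_gen //.
    by rewrite !inE -order_dvdn -oZ order_dvdG // (subsetP (center_sub G)).
  rewrite (OhmE _ pG) gen_subG; apply/subsetP => u /setIdP[Gu u2].
  case: (eqVneq u 1) => [-> | ntu]; first exact: group1.
  apply: noinv => //; apply: nt_prime_order => //; by move: u2; rewrite inE expn1 => /eqP.
have [n' n'_gt2 isoG]: exists2 n', n' > 2 & G \isog 'Q_(2 ^ n').
  apply/quaternion_classP; apply/eqP.
  have not_cycG: ~~ cyclic G.
    by apply: contra (extraspecial_nonabelian esG); apply: cyclic_abelian.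
  move: oZ; rewrite defG1; move/prime_Ohm1P; rewrite (negPf not_cycG) /=.
  by apply=> //; apply: contra not_cycG; move/eqP->; apply: cyclic1.
have n'3 : n' = 3.
  have [[x y] genG _] := generators_quaternion n'_gt2 isoG.
  have [_ [_ _ oG' _] _ _ _] := quaternion_structure n'_gt2 genG isoG.
  apply/eqP; rewrite -(subnKC (ltnW n'_gt2)) subn2 !eqSS -(@eqn_exp2l 2) //.
  by rewrite -oG' -oZ; case: esG => [[_ ->]].
by rewrite n'3 in isoG.
Qed.

End Ext.

Theorem theorem4p4 (gT : finGroupType) (G : {group gT}) :
  (2).-group G -> extraspecial G ->
  (forall g h : gT, g \in G -> h \in G ->
     ((exists2 phi, phi \in Aut G & phi g = h) <->
      (#[g] = #[h] /\ (g \in 'Z(G) <-> h \in 'Z(G)))))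
  /\
  #|[set orbit 'P (Aut G) x | x in G]| = (if G \isog 'Q_8 then 3 else 4).
Proof.
move=> pG esG.
have oZ := card_center_extraspecial pG esG.
have [z Zz ntz] : exists2 z, z \in 'Z(G) & z != 1.
  by apply/trivgPn; rewrite -cardG_gt1 oZ.
have defZ : 'Z(G) = [set 1; z].
  apply/eqP; rewrite eq_sym eqEcard subUset !sub1set group1 Zz cards2 oZ.
  by rewrite eq_sym ntz.
have PI := partI pG esG defZ ntz.
have KP := keyP pG esG defZ ntz.
split; first by move=> g h Gg Gh; apply: PI.
have orbE x : x \in G -> orbit 'P (Aut G) x = [set y in G | key G y == key G x].
  move=> Gx; apply/setP => y; rewrite inE; apply/orbitP/andP.
    case=> a Aa; rewrite /= ?apermE => <-; split; first exact: Aut_closed.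
    apply/eqP/esym; apply/KP => //; first exact: Aut_closed.
    by apply/PI => //; [exact: Aut_closed | exists a].
  case=> Gy /eqP k.
  have [a Aa ag] : exists2 a, a \in Aut G & a x = y.
    by apply/PI => //; apply/KP => //.
  by exists a; rewrite ?apermE.
pose F (k : bool * bool) := [set y in G | key G y == k].
have -> : [set orbit 'P (Aut G) x | x in G] = F @: (key G @: G).
  by rewrite -imset_comp; apply: eq_in_imset => x Gx; rewrite /= orbE.
rewrite card_in_imset; last first.
  move=> k1 k2 /imsetP[x1 Gx1 ->] _ eqF.
  have : x1 \in F (key G x1) by rewrite inE Gx1 eqxx.
  by rewrite eqF inE => /andP[_ /eqP].
have k1 : (false, true) \in key G @: G.
  by apply/imsetP; exists 1; rewrite ?group1 // /key order1 group1.
have k2 : (true, true) \in key G @: G.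
  by apply/imsetP; exists z; rewrite ?Gz // /key (oz defZ ntz) Zz.
have k3 : (false, false) \in key G @: G.
  have [x Gx ex] := exponent_witness (pgroup_nil pG).
  rewrite (exponent_2extraspecial pG esG) in ex.
  apply/imsetP; exists x => //; rewrite /key -ex /=.
  case Zx: (x \in 'Z(G)) => //.
  by case: (orderZ defZ ntz Zx) ex => [[_ ->]|[_ ->]].
case: ifP => isoQ.
  have notk : (true, false) \notin key G @: G.
    apply/imsetP => -[x Gx] /esym [/eqP ox nZx].
    by move: nZx; rewrite (Q8_noinv isoQ Gx ox).
  have -> : key G @: G = [set~ (true, false)].
    apply/setP => -[[] []]; rewrite !inE ?k1 ?k2 ?k3 //.
    by rewrite (negPf notk).
  by rewrite cardsC1 card_prod card_bool.
have : [exists x in G, (#[x] == 2) && (x \notin 'Z(G))].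
  apply: contraFT isoQ => /exists_inPn H; apply: (noinv_Q8 pG esG defZ ntz) => x Gx ox.
  by have := H x Gx; rewrite ox eqxx /= negbK.
case/exists_inP => x Gx /andP[ox nZx].
have k4 : (true, false) \in key G @: G.
  by apply/imsetP; exists x => //; rewrite /key ox (negPf nZx).
have -> : key G @: G = [set: bool * bool].
  by apply/setP => -[[] []]; rewrite !inE ?k1 ?k2 ?k3 ?k4.
by rewrite cardsT card_prod card_bool.
Qed.
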